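(* Let $w$ be a string of length $n$ with minimal period $p>1$, and let $k=\max\{l\ge 0 : w[1..l]=w[j..j+l-1]\text{ for some } j \text{ with } 1<j\le p\}$. Then the leftmost critical point of $w$ is the leftmost position $i>k+1$ of $w$ such that $i-\mu(i)<1$ or $i+\mu(i)-1>n$.
   Context: $w[i..j]=w[i]\cdots w[j]$ (empty if $i>j$), and substrings $w[j..j+l-1]$ are required to lie within $w$. A period of $w$ is an integer $p$ with $0<p\le n$ and $w[j]=w[j+p]$ for all $1\le j\le n-p$. For a position $i\in\{1,\dots,n\}$, the local period $\mu(i)$ is the least positive integer $\mu$ such that $w[j]=w[j+\mu]$ for all $j$ with $\max\{1,i-\mu\}\le j$ and $j+\mu\le\min\{n,i+\mu-1\}$. A position $i$ is a critical point of $w$ if $\mu(i)$ equals the minimal period of $w$. *)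

(* Defs.v *)
From mathcomp Require Import all_boot.
Set Implicit Arguments. Unset Strict Implicit. Unset Printing Implicit Defensive.

(* Strings are sequences over an eqType alphabet; positions are 1-indexed:
   the letter w[j] (1 <= j <= size w) is  onth w j.-1  (= Some _ in range). *)
Definition letter (T : eqType) (w : seq T) (j : nat) : option T := onth w j.-1.

Definition is_period (T : eqType) (w : seq T) (p : nat) : Prop :=
  0 < p <= size w /\
  forall j, 1 <= j -> j + p <= size w -> letter w j = letter w (j + p).

Definition is_min_period (T : eqType) (w : seq T) (p : nat) : Prop :=
  is_period w p /\ forall q, is_period w q -> p <= q.

Definition local_rep (T : eqType) (w : seq T) (i mu : nat) : bool :=
  [forall j : 'I_(size w).+1,
     ((maxn 1 (i - mu) <= j) && (j + mu <= minn (size w) (i + mu - 1)))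
       ==> (letter w j == letter w (j + mu))].

Lemma local_rep_exists (T : eqType) (w : seq T) (i : nat) :
  exists mu, (0 < mu) && local_rep w i mu.
Proof.
exists (size w).+1; apply/andP; split => //.
apply/forallP => j; apply/implyP => /andP [_ H].
have : j + (size w).+1 <= size w by apply: (leq_trans H); exact: geq_minl.
by rewrite addnS ltnNge leq_addl.
Qed.

Definition local_period (T : eqType) (w : seq T) (i : nat) : nat :=
  ex_minn (local_rep_exists w i).

Definition is_critical (T : eqType) (w : seq T) (p i : nat) : Prop :=
  1 <= i <= size w /\ local_period w i = p.

Definition prefix_occurs_at (T : eqType) (w : seq T) (j l : nat) : Prop :=
  j + l - 1 <= size w /\ take l w = take l (drop j.-1 w).

Definition leftmost (P : nat -> Prop) (i : nat) : Prop :=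
  P i /\ forall j, P j -> i <= j.

Definition is_max (P : nat -> Prop) (k : nat) : Prop :=
  P k /\ forall l, P l -> l <= k.

(* Main.v *)
Require Import Defs.
From mathcomp Require Import all_boot.
From mathcomp Require Import zify.
Set Implicit Arguments. Unset Strict Implicit. Unset Printing Implicit Defensive.

Fixpoint lexle (lt : rel nat) (x y : seq nat) : bool :=
  match x, y with
  | [::], _ => true
  | _ :: _, [::] => false
  | a :: x', b :: y' => lt a b || ((a == b) && lexle lt x' y')
  end.

Section LexS.
Variable lt : rel nat.
Hypothesis irr : forall a, lt a a = false.

Lemma lex_cancel x y z : lexle lt (x ++ y) (x ++ z) = lexle lt y z.
Proof. by elim: x => //= a x ->; rewrite irr eqxx. Qed.

Lemma lex_proper x y : y != [::] -> lexle lt (x ++ y) x = false.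
Proof. elim: x => [|a x IH] /=; first by case: y. by move=> /IH ->; rewrite irr andbF. Qed.

Hypothesis asym : forall a b, lt a b -> lt b a -> False.

Lemma lex_antisym x y : lexle lt x y -> lexle lt y x -> x = y.
Proof.
elim: x y => [|a x IH] [|b y] //=.
case: (boolP (lt a b)) => [lab|nab] /=.
  move=> _; case: (boolP (lt b a)) => [lba|_]; first by case: (asym lab lba).
  by case: eqP => // eba; move: lab; rewrite eba irr.
case: eqP => //= -> Hxy; rewrite irr eqxx /= => /(IH _ Hxy) ->; done.
Qed.

Hypothesis tot : forall a b, a != b -> lt a b || lt b a.
Hypothesis tr : forall a b c, lt a b -> lt b c -> lt a c.

Lemma lex_total x y : lexle lt x y || lexle lt y x.
Proof.
elim: x y => [|a x IH] [|b y] //=.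
case: (eqVneq a b) => [<-|nab]; first by rewrite !irr /=; apply: IH.
by move: (tot nab); case/orP => ->; rewrite ?orbT.
Qed.

Lemma lex_trans x y z : lexle lt x y -> lexle lt y z -> lexle lt x z.
Proof.
elim: x y z => [|a x IH] [|b y] [|c z] //=.
case/orP => [lab|/andP[/eqP <- Hxy]]; case/orP => [lbc|/andP[/eqP <- Hyz]].
- by rewrite (tr lab lbc).
- by rewrite lab.
- by rewrite lbc.
- by rewrite eqxx (IH _ _ Hxy Hyz) orbT.
Qed.

Lemma exists_max (f : nat -> seq nat) m :
  exists2 q, q <= m & forall x, x <= m -> lexle lt (f x) (f q).
Proof.
elim: m => [|m [q qm Hq]].
  exists 0 => // x; rewrite leqn0 => /eqP ->.
  by case/orP: (lex_total (f 0) (f 0)).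
case/orP: (lex_total (f m.+1) (f q)) => H.
  exists q; first by apply: leqW.
  move=> x; rewrite leq_eqVlt ltnS; case/orP => [/eqP -> //|]; exact: Hq.
exists m.+1 => // x; rewrite leq_eqVlt ltnS; case/orP => [/eqP -> |xm].
  by case/orP: (lex_total (f m.+1) (f m.+1)).
exact: lex_trans (Hq _ xm) H.
Qed.
End LexS.

Lemma lex_both (lt1 lt2 : rel nat) x y :
  (forall a b, lt1 a b -> lt2 a b -> False) ->
  (forall a, lt1 a a = false) ->  (forall a, lt2 a a = false) ->
  lexle lt1 x y -> lexle lt2 x y -> y = x ++ drop (size x) y.
Proof.
move=> dis i1 i2; elim: x y => [|a x IH] [|b y] //=.
case/orP => [l1|/andP[/eqP e1 H1]]; case/orP => [l2|/andP[/eqP e2 H2]].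
- by case: (dis _ _ l1 l2).
- by subst b; rewrite i1 in l1.
- by subst b; rewrite i2 in l2.
- by subst b; rewrite -(IH y H1 H2).
Qed.

Definition per (s : seq nat) r :=
  forall x, x + r < size s -> nth 0 s x = nth 0 s (x + r).
Definition rep0 (s : seq nat) q r :=
  forall x, q - r <= x -> x < q -> x + r < size s -> nth 0 s x = nth 0 s (x + r).

Lemma take_drop_eq (s : seq nat) a b m :
  (forall y, y < m -> nth 0 s (a + y) = nth 0 s (b + y)) ->
  a + m <= size s -> b + m <= size s ->
  take m (drop a s) = take m (drop b s).
Proof.
move=> H ha hb; apply: (@eq_from_nth _ 0).
  rewrite !size_takel ?size_drop //; lia.
move=> y; rewrite size_takel ?size_drop => [hy|]; last lia.
rewrite !nth_take; try lia. rewrite !nth_drop; apply: H; lia.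
Qed.

Lemma proper_contra (lt : rel nat) (s : seq nat) a b :
  (forall c, lt c c = false) -> a < b -> b <= size s ->
  (forall y, y < size s - b -> nth 0 s (a + y) = nth 0 s (b + y)) ->
  lexle lt (drop a s) (drop b s) = false.
Proof.
move=> irr ab bn H.
rewrite -(cat_take_drop (size s - b) (drop a s)).
rewrite (take_drop_eq H); try lia.
rewrite take_oversize; last by rewrite size_drop.
apply: lex_proper => //.
rewrite -size_eq0 !size_drop -lt0n; change (0 < size s - a - (size s - b)); lia.
Qed.

Lemma cft_gen (lt1 lt2 : rel nat) (s : seq nat) p q q' :
  (forall a, lt1 a a = false) -> (forall a, lt2 a a = false) ->
  (forall a b, lt1 a b -> lt2 a b -> False) ->
  (forall a b, lt1 a b -> lt1 b a -> False) ->
  0 < p <= size s -> per s p ->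
  (forall r, 0 < r -> r <= size s -> per s r -> p <= r) ->
  q' <= q -> q < size s ->
  (forall x, x < size s -> lexle lt1 (drop x s) (drop q s)) ->
  (forall x, x < size s -> lexle lt2 (drop x s) (drop q' s)) ->
  q < p /\ forall r, 0 < r -> r < p -> ~ rep0 s q r.
Proof.
move=> i1 i2 dis as1 /andP[p0 pn] perp pmin qq' qn max1 max2.
split.
  rewrite ltnNge; apply/negP => pq.
  have := max1 (q - p) ltac:(lia).
  rewrite (@proper_contra lt1 s (q - p) q) //; try lia.
  move=> y hy; rewrite perp; last lia.
  by have -> : q - p + y + p = q + y by lia.
move=> r r0 rp rep.
have rn : r <= size s by lia.
have contr : per s r -> False by move=> /(pmin r r0 rn); lia.
case: (leqP r q) => rq.
- case: (leqP (size s - q) r) => hsz.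
    have := max1 (q - r) ltac:(lia).
    rewrite (@proper_contra lt1 s (q - r) q) //; try lia.
    move=> y hy; rewrite rep; try lia.
    by have -> : q - r + y + r = q + y by lia.
  have hP : take r (drop (q - r) s) = take r (drop q s).
    apply: take_drop_eq; try lia.
    move=> y hy; rewrite rep; try lia.
    by have -> : q - r + y + r = q + y by lia.
  have hZ : drop (q - r) s = take r (drop q s) ++ drop q s.
    rewrite -hP -{1}(cat_take_drop r (drop (q - r) s)) drop_drop.
    by have -> : r + (q - r) = q by lia.
  have hV : drop q s = take r (drop q s) ++ drop (r + q) s
    by rewrite -drop_drop cat_take_drop.
  have m1 : lexle lt1 (take r (drop q s) ++ drop q s)
                      (take r (drop q s) ++ drop (r + q) s).
    by rewrite -hZ -hV; apply: max1; lia.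
  rewrite lex_cancel // in m1.
  have m2 := max1 (r + q) ltac:(lia).
  have := lex_antisym i1 as1 m1 m2.
  move=> /(f_equal size); rewrite !size_drop; lia.
- case: (leqP (size s) (q + r)) => hqr.
    apply: contr => x hx; apply: rep; lia.
  have hD1 : drop (q' + r) s = take (q - q') (drop q' s) ++ drop (q + r) s.
    rewrite -{1}(cat_take_drop (q - q') (drop (q' + r) s)) drop_drop.
    have -> : q - q' + (q' + r) = q + r by lia.
    congr (_ ++ _); apply: take_drop_eq; try lia.
    move=> y hy; rewrite [in RHS]rep; try lia.
    by have -> : q' + y + r = q' + r + y by lia.
  have hD : drop q' s = take (q - q') (drop q' s) ++ drop q s.
    rewrite -{1}(cat_take_drop (q - q') (drop q' s)) drop_drop.
    by have -> : q - q' + q' = q by lia.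
  have m2 := max2 (q' + r) ltac:(lia).
  rewrite hD1 {2}hD lex_cancel // in m2.
  have m1 := max1 (q + r) ltac:(lia).
  have hb := lex_both dis i1 i2 m1 m2.
  apply: contr => x hx.
  case: (ltnP x q) => xq; first by apply: rep; lia.
  have hy : x - q < size (drop (q + r) s) by rewrite size_drop; lia.
  have e1 : nth 0 s x = nth 0 (drop q s) (x - q) by rewrite nth_drop; congr nth; lia.
  have e2 : nth 0 s (x + r) = nth 0 (drop (q + r) s) (x - q)
    by rewrite nth_drop; congr nth; lia.
  by rewrite e1 e2 hb nth_cat hy.
Qed.

Lemma cft (s : seq nat) p :
  0 < p <= size s -> per s p ->
  (forall r, 0 < r -> r <= size s -> per s r -> p <= r) ->
  exists q, q < p /\ forall r, 0 < r -> r < p -> ~ rep0 s q r.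
Proof.
move=> hp perp pmin.
have n0 : 0 < size s by case/andP: hp => ? ?; lia.
have i1 : forall a, ltn a a = false by move=> a; exact: ltnn.
have i2 : forall a, (fun a b => ltn b a) a a = false by move=> a; exact: ltnn.
have tot1 : forall a b : nat, a != b -> ltn a b || ltn b a.
  by move=> a b; rewrite neq_ltn.
have tot2 : forall a b : nat, a != b -> (fun a b => ltn b a) a b || (fun a b => ltn b a) b a.
  by move=> a b; rewrite neq_ltn orbC.
have tr1 : forall a b c : nat, ltn a b -> ltn b c -> ltn a c.
  by move=> a b c; apply: ltn_trans.
have tr2 : forall a b c : nat, (fun a b => ltn b a) a b -> (fun a b => ltn b a) b c -> (fun a b => ltn b a) a c.
  by move=> a b c /= h1 h2; apply: ltn_trans h2 h1.
have [q1 hq1 M1] := exists_max i1 tot1 tr1 (fun x => drop x s) (size s).-1.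
have [q2 hq2 M2] := exists_max i2 tot2 tr2 (fun x => drop x s) (size s).-1.
have M1' : forall x, x < size s -> lexle ltn (drop x s) (drop q1 s).
  by move=> x hx; apply: M1; lia.
have M2' : forall x, x < size s -> lexle (fun a b => ltn b a) (drop x s) (drop q2 s).
  by move=> x hx; apply: M2; lia.
have d1 : forall a b, ltn a b -> (fun a b => ltn b a) a b -> False.
  by move=> a b /= h1 h2; lia.
have d2 : forall a b, (fun a b => ltn b a) a b -> ltn a b -> False.
  by move=> a b /= h1 h2; lia.
have a1 : forall a b, ltn a b -> ltn b a -> False.
  by move=> a b /= h1 h2; lia.
have a2 : forall a b, (fun a b => ltn b a) a b -> (fun a b => ltn b a) b a -> False.
  by move=> a b /= h1 h2; lia.
case: (leqP q2 q1) => h.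
- exists q1; apply: (cft_gen i1 i2 d1 a1 hp perp pmin h _ M1' M2'); lia.
- exists q2; apply: (cft_gen i2 i1 d2 a2 hp perp pmin (ltnW h) _ M2' M1'); lia.
Qed.

Section MainS.
Variable T : eqType.
Variable w : seq T.

Local Notation ws := (map Some w).
Local Notation s := (map (fun o => index o (map Some w)) (map Some w)).

Lemma letterE j : letter w j = nth None ws j.-1.
Proof. by rewrite /letter onthE. Qed.

Lemma local_repP i mu :
  local_rep w i mu <-> forall j, maxn 1 (i - mu) <= j ->
     j + mu <= minn (size w) (i + mu - 1) -> letter w j = letter w (j + mu).
Proof.
split.
  move/forallP => H j h1 h2.
  have jn : j < (size w).+1 by lia.
  by have := H (Ordinal jn); rewrite /= h1 h2 /= => /eqP.
move=> H; apply/forallP => j; apply/implyP => /andP[h1 h2]; apply/eqP; exact: H.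
Qed.

Lemma size_s : size s = size w.
Proof. by rewrite !size_map. Qed.

Lemma sE x y : x < size w -> y < size w ->
  (nth None ws x = nth None ws y) <-> (nth 0 s x = nth 0 s y).
Proof.
move=> hx hy; rewrite !(nth_map None) ?size_map //.
split; first by move=> ->.
move=> e. have hx2 : nth None ws x \in ws by apply: mem_nth; rewrite size_map. have hy2 : nth None ws y \in ws by apply: mem_nth; rewrite size_map. exact: (index_inj None hx2 hy2 e).
Qed.

Lemma T1 r : is_period w r -> per s r.
Proof.
move=> [_ H] x; rewrite size_s => hx.
have := H x.+1 ltac:(lia) ltac:(lia).
rewrite !letterE; have -> : (x.+1 + r).-1 = x + r by lia.
move=> /sE; apply; lia.
Qed.

Lemma T2 r : 0 < r <= size w -> per s r -> is_period w r.
Proof.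
move=> hr H; split => // j j1 jr.
rewrite !letterE.
have -> : (j + r).-1 = j.-1 + r by lia.
apply/sE; try lia.
apply: H; rewrite size_s; lia.
Qed.

Lemma T3 q r : 0 < r -> local_rep w q.+1 r -> rep0 s q r.
Proof.
move=> r0 /local_repP H x h1 h2; rewrite size_s => h3.
have := H x.+1 ltac:(lia) ltac:(lia).
rewrite !letterE; have -> : (x.+1 + r).-1 = x + r by lia.
move=> /sE; apply; lia.
Qed.

End MainS.

Theorem lemma4 (T : eqType) (w : seq T) (p k : nat) :
  is_min_period w p -> 1 < p ->
  is_max (fun l => exists j, 1 < j <= p /\ prefix_occurs_at w j l) k ->
  exists i,
    leftmost (fun i => is_critical w p i) i /\
    leftmost (fun i => k + 1 < i <= size w /\
                (i < local_period w i + 1 \/ size w + 1 < i + local_period w i)) i.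
Proof.
move=> [perp pmin] p1 [[j0 [/andP[j0a j0b] [hj0 htake]]] kmax].
have pn : p <= size w by case: perp => /andP[].
have muP : forall i, 0 < local_period w i /\ local_rep w i (local_period w i) /\
    forall m, 0 < m -> local_rep w i m -> local_period w i <= m.
  move=> i; rewrite /local_period; case: ex_minnP => m /andP[m0 hm] hmin.
  split => //; split => // m' m0' hm'; apply: hmin; by rewrite m0' hm'.
have mup : forall i, local_period w i <= p.
  move=> i; have [_ [_ hmin]] := muP i; apply: hmin; first lia.
  apply/local_repP => j h1 h2; case: perp => _ H; apply: H; lia.
have FA : forall i, i <= k.+1 -> local_period w i < p.
  move=> i hi.
  have hr : local_rep w i j0.-1.
    apply/local_repP => j h1 h2.
    have := f_equal (fun l => nth None (map Some l) j.-1) htake.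
    rewrite /= !map_take !nth_take; try lia.
    rewrite map_drop nth_drop !letterE => ->; congr nth; lia.
  have [_ [_ hmin]] := muP i.
  have := hmin j0.-1 ltac:(lia) hr; lia.
have [q [qp hq]] : exists q, q < p /\ forall r, 0 < r -> r < p ->
    ~ rep0 (map (fun o => index o (map Some w)) (map Some w)) q r.
  apply: cft.
  - rewrite size_s; lia.
  - exact: T1.
  - move=> r r0; rewrite size_s => rn /T2 hr.
    apply: pmin; apply: hr; lia.
have crit_c : local_period w q.+1 = p.
  apply/eqP; rewrite eqn_leq mup /= leqNgt; apply/negP => lt.
  have [m0 [hm _]] := muP q.+1.
  by apply: (hq _ m0 lt); apply: T3.
have exc : exists i, (0 < i <= size w) && (local_period w i == p).
  by exists q.+1; rewrite crit_c eqxx andbT; apply/andP; split; lia.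
case: (ex_minnP exc) => c0 /andP[/andP[c01 c0n] /eqP c0p] c0min.
have c0q : c0 <= q.+1 by apply: c0min; rewrite crit_c eqxx andbT; apply/andP; split; lia.
have c0k : k.+1 < c0.
  rewrite ltnNge; apply/negP => h; have := FA _ h; lia.
have critmin : forall i, is_critical w p i -> c0 <= i.
  move=> i [/andP[i1 i2] ip]; apply: c0min; rewrite ip eqxx andbT; apply/andP; split; lia.
exists c0; split.
  split; last exact: critmin.
  by split => //; apply/andP; split.
split.
  split; first by apply/andP; split; lia.
  left; rewrite c0p; lia.
move=> i [/andP[ik iw] [hl|hr]].
- apply: critmin; split; first by apply/andP; split; lia.
  set m := local_period w i.
  have [m0 [hm _]] := muP i.
  apply/eqP; rewrite eqn_leq mup /= leqNgt; apply/negP => mp.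
  have hm' := proj1 (local_repP w i m) hm.
  set l := minn (i - 1) (size w - m).
  have occ : prefix_occurs_at w m.+1 l.
    split; first lia.
    apply: (inj_map Some_inj); rewrite /= !map_take map_drop.
    apply: (@eq_from_nth _ None).
      rewrite !size_takel ?size_drop ?size_map //; lia.
    move=> y; rewrite size_takel ?size_map => [hy|]; last lia.
    rewrite !nth_take; try lia.
    rewrite nth_drop.
    have := hm' y.+1 ltac:(lia) ltac:(lia).
    rewrite !letterE; have -> : (y.+1 + m).-1 = m + y by lia. done.
  have lk : l <= k by apply: kmax; exists m.+1; split => //; apply/andP; split; lia.
  have perm : is_period w m.
    split; first by apply/andP; split; lia.
    move=> j j1 jm; apply: hm'; lia.
  have := pmin _ perm; lia.
- case: (eqVneq (local_period w i) p) => [ip|ip].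
    by apply: critmin; split => //; apply/andP; split; lia.
  have mp : local_period w i < p by have := mup i; lia.
  rewrite leqNgt; apply/negP => ic.
  have [m0 [hm _]] := muP i.
  have hm' := proj1 (local_repP w i _) hm.
  have [_ [_ hmin]] := muP c0.
  have : local_rep w c0 (local_period w i).
    apply/local_repP => j h1 h2; apply: hm'; lia.
  move=> /(hmin _ m0); lia.
Qed.
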